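(* Let $a\in\mathcal{T}_n$ have rank $k$ with $k<n$ and kernel type $\lambda$. Let $G\le\mathcal{S}_n$ be a group which is $k$-homogeneous and $\lambda$-homogeneous. Then $(a,G)$ is an $\mathcal{S}_n$-pair, i.e. $\langle a,G\rangle\setminus G=\langle a,\mathcal{S}_n\rangle\setminus\mathcal{S}_n$.
   Context: $\Omega=\{1,\ldots,n\}$, $\mathcal{T}_n$ is the monoid of all maps $\Omega\to\Omega$, $\mathcal{S}_n$ the symmetric group. $\operatorname{rank}(a)=|\Omega a|$; the kernel of $a$ is the partition of $\Omega$ into the classes of $\{(x,y):xa=ya\}$, and its type is the non-increasing list of class sizes. $G$ is $k$-homogeneous if transitive on $k$-subsets of $\Omega$. For a partition $\lambda$ of $n$, $G$ is $\lambda$-homogeneous if for any two ordered partitions $(A_1,A_2,\ldots)$, $(B_1,B_2,\ldots)$ of $\Omega$ with $|A_i|=|B_i|=\lambda_i$ there is $g\in G$ mapping the set of parts $\{A_1,A_2,\ldots\}$ onto $\{B_1,B_2,\ldots\}$. *)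

(* Defs.v *)
From mathcomp Require Import all_boot all_fingroup.
Set Implicit Arguments. Unset Strict Implicit. Unset Printing Implicit Defensive.

(* Omega = 'I_n ; T_n = {ffun 'I_n -> 'I_n} ; S_n = {perm 'I_n}. *)
Notation tmap n := {ffun 'I_n -> 'I_n}.

(* right-action composition: x (f ; g) = (x f) g *)
Definition tcomp n (f g : tmap n) : tmap n := [ffun x => g (f x)].
Definition tid n : tmap n := [ffun x => x].
Definition pmap n (g : {perm 'I_n}) : tmap n := [ffun x => g x].

Inductive gen_monoid n (S : tmap n -> Prop) : tmap n -> Prop :=
| gen_one : gen_monoid S (tid n)
| gen_mul f s : gen_monoid S f -> S s -> gen_monoid S (tcomp f s).

Definition gens n (a : tmap n) (G : {set {perm 'I_n}}) : tmap n -> Prop :=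
  fun f => f = a \/ exists2 g, g \in G & f = pmap g.

Definition in_gen_minus n (a : tmap n) (G : {set {perm 'I_n}}) (f : tmap n) : Prop :=
  gen_monoid (gens a G) f /\ ~ (exists2 g, g \in G & f = pmap g).

Definition rank n (a : tmap n) : nat := #|[set a x | x : 'I_n]|.

Definition kernel n (a : tmap n) : {set {set 'I_n}} := preim_partition a [set: 'I_n].

Definition ptype n (P : {set {set 'I_n}}) : seq nat := sort geq [seq #|A| | A : {set 'I_n} in P].

Definition kernel_type n (a : tmap n) : seq nat := ptype (kernel a).

Definition k_homogeneous n (G : {set {perm 'I_n}}) (k : nat) : Prop :=
  forall A B : {set 'I_n}, #|A| = k -> #|B| = k ->
    exists2 g, g \in G & [set g x | x in A] = B.

Definition lambda_homogeneous n (G : {set {perm 'I_n}}) (lam : seq nat) : Prop :=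
  forall P Q : {set {set 'I_n}},
    partition P [set: 'I_n] -> partition Q [set: 'I_n] ->
    ptype P = lam -> ptype Q = lam ->
    exists2 g, g \in G & [set [set g x | x in A] | A : {set 'I_n} in P] = Q.

Definition Sn_pair n (a : tmap n) (G : {set {perm 'I_n}}) : Prop :=
  forall f : tmap n, in_gen_minus a G f <-> in_gen_minus a [set: {perm 'I_n}] f.

(* Main.v *)
Require Import Defs.
From mathcomp Require Import all_boot all_fingroup.
Set Implicit Arguments. Unset Strict Implicit. Unset Printing Implicit Defensive.
Local Open Scope group_scope.
Notation pmap := Defs.pmap.

Section Gen.
Variable n : nat.
Implicit Types (f g h : tmap n).

Lemma tcompA f g h : tcomp f (tcomp g h) = tcomp (tcomp f g) h.
Proof. by apply/ffunP => x; rewrite !ffunE. Qed.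
Lemma tcomp_id f : tcomp f (tid n) = f.
Proof. by apply/ffunP => x; rewrite !ffunE. Qed.
Lemma tid_comp f : tcomp (tid n) f = f.
Proof. by apply/ffunP => x; rewrite !ffunE. Qed.
Lemma pmap1 : pmap (1 : {perm 'I_n}) = tid n.
Proof. by apply/ffunP => x; rewrite !ffunE perm1. Qed.
Lemma pmapM (p q : {perm 'I_n}) : tcomp (pmap p) (pmap q) = pmap (p * q).
Proof. by apply/ffunP => x; rewrite !ffunE permM. Qed.

Variable S0 : tmap n -> Prop.
Lemma gen_comp f g : gen_monoid S0 f -> gen_monoid S0 g -> gen_monoid S0 (tcomp f g).
Proof.
move=> Hf; elim=> [|g' s _ IH Hs]; first by rewrite tcomp_id.
rewrite tcompA; exact: gen_mul.
Qed.
Lemma gen_gen s : S0 s -> gen_monoid S0 s.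
Proof. by move=> Hs; rewrite -(tid_comp s); apply: gen_mul => //; apply: gen_one. Qed.

Definition mkperm (fn : 'I_n -> 'I_n) : {perm 'I_n} :=
  odflt 1 [pick q : {perm 'I_n} | [forall x, q x == fn x]].
Lemma mkpermE (fn : 'I_n -> 'I_n) : injective fn -> forall x, mkperm fn x = fn x.
Proof.
move=> inj x; rewrite /mkperm; case: pickP => [q /forallP /(_ x) /eqP //|].
move/(_ (perm inj)); rewrite /=; move/negbT/forallPn => [y]; by rewrite permE eqxx.
Qed.
Lemma mkperm_cases (fn : 'I_n -> 'I_n) : (forall x, mkperm fn x = fn x) \/ mkperm fn = 1.
Proof.
rewrite /mkperm; case: pickP => [q /forallP H|_]; last by right.
by left => x; apply/eqP/H.
Qed.
End Gen.
Section Main.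
Variables (n : nat) (a : tmap n) (G : {group {perm 'I_n}}).
Hypotheses (Hr : rank a < n) (Hk : k_homogeneous G (rank a))
  (Hl : lambda_homogeneous G (kernel_type a)).
Let A := [set a x | x : 'I_n].
Let S := gen_monoid (gens a G).

Lemma inA x : a x \in A.
Proof. by apply/imsetP; exists x. Qed.

Lemma S_a : S a.
Proof. by apply: gen_gen; left. Qed.
Lemma S_G g : g \in G -> S (pmap g).
Proof. by move=> Hg; apply: gen_gen; right; exists g. Qed.

Lemma a_ninj : exists x, exists2 x', x != x' & a x = a x'.
Proof.
have : ~~ injectiveb a.
  apply: contraL Hr => /injectiveP inj.
  by rewrite /rank card_imset // card_ord ltnn.
by move/injectivePn.
Qed.

Lemma cardA : #|A| = rank a.
Proof. by []. Qed.

Lemma permT (s : {perm 'I_n}) : [set s x | x in [set: 'I_n]] = [set: 'I_n].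
Proof.
apply/setP => x; rewrite inE; apply/imsetP; exists (s^-1 x); by rewrite ?inE ?permKV.
Qed.

Lemma lam_step (s : {perm 'I_n}) :
  exists2 h, h \in G & forall x y, (a (h x) == a (h y)) = (a (s x) == a (s y)).
Proof.
set P := kernel a.
have partP : partition P [set: 'I_n] := preim_partitionP a _.
have [_ tiP _] := and3P partP.
have sameP u v : (a u == a v) = (v \in pblock P u).
  rewrite /P /kernel /preim_partition pblock_equivalence_partition ?inE //.
  by split=> // /eqP->.
set Q := [set [set s^-1 x | x in B] | B : {set 'I_n} in P].
have partQ : partition Q [set: 'I_n].
  have H := imset_partition P [set: 'I_n] (@perm_inj _ s^-1).
  have := partP; rewrite -H.
  have -> : [set s^-1 x | x in [set: 'I_n]] = [set: 'I_n] by apply: permT.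
  by [].
have [_ tiQ _] := and3P partQ.
have ptQ : ptype Q = ptype P.
  rewrite /ptype; apply/perm_sortP.
  - by move=> u v; apply: leq_total.
  - by move=> u v w /= h1 h2; apply: leq_trans h2 h1.
  - by move=> u v /andP[h1 h2]; apply/eqP; rewrite eqn_leq; apply/andP; split.
  pose F := fun B : {set 'I_n} => [set s^-1 x | x in B].
  have inj : injective F by exact: imset_inj (@perm_inj _ s^-1).
  have -> : [seq #|B| | B : {set 'I_n} in P] =
            map (fun B : {set 'I_n} => #|B|) (map F (enum P)).
    rewrite -map_comp; apply: eq_map => B /=; rewrite card_imset //; exact: perm_inj.
  apply: perm_map; apply: uniq_perm; rewrite ?enum_uniq ?(map_inj_uniq inj) ?enum_uniq //.
  move=> B; rewrite mem_enum; apply/imsetP/mapP => [[C CP ->]|[C CP ->]];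
    by exists C; rewrite ?mem_enum in CP *.
have [g Gg Hg] := Hl partP partQ erefl ptQ.
exists g^-1; first by rewrite groupV.
move=> x y; rewrite !sameP.
have Bx : pblock P (g^-1 x) \in P by apply: pblock_mem; rewrite (cover_partition partP) inE.
have By : pblock P (s x) \in P by apply: pblock_mem; rewrite (cover_partition partP) inE.
have E : [set g z | z in pblock P (g^-1 x)] = [set s^-1 z | z in pblock P (s x)].
  have Q1 : [set g z | z in pblock P (g^-1 x)] \in Q.
    by rewrite -Hg; apply/imsetP; exists (pblock P (g^-1 x)).
  have Q2 : [set s^-1 z | z in pblock P (s x)] \in Q by apply/imsetP; exists (pblock P (s x)).
  have x1 : x \in [set g z | z in pblock P (g^-1 x)].
    apply/imsetP; exists (g^-1 x); rewrite ?permKV // mem_pblock (cover_partition partP) inE //.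
  have x2 : x \in [set s^-1 z | z in pblock P (s x)].
    apply/imsetP; exists (s x); rewrite ?permK // mem_pblock (cover_partition partP) inE //.
  by rewrite -(def_pblock tiQ Q1 x1) (def_pblock tiQ Q2 x2).
have e1 : (g^-1 y \in pblock P (g^-1 x)) = (y \in [set g z | z in pblock P (g^-1 x)]).
  by rewrite -{2}(permKV g y) mem_imset //; exact: perm_inj.
have e2 : (s y \in pblock P (s x)) = (y \in [set s^-1 z | z in pblock P (s x)]).
  by rewrite -{2}(permK s y) mem_imset //; exact: perm_inj.
by rewrite e1 e2 E.
Qed.

Definition rep (c : 'I_n) : 'I_n := odflt c [pick z | a z == c].
Lemma repP c : c \in A -> a (rep c) = c.
Proof.
case/imsetP => x _ ->; rewrite /rep; case: pickP => [z /eqP //|/(_ x)].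
by rewrite eqxx.
Qed.

Lemma lam_perm (p : {perm 'I_n}) :
  exists2 h, h \in G & exists pi : {perm 'I_n}, forall x, a (p x) = pi (a (h x)).
Proof.
have [h Gh Hh] := lam_step p.
exists h => //.
pose f := fun u => if u \in A then a (p (h^-1 (rep u))) else u.
have finj : injective f.
  move=> u v; rewrite /f.
  case: ifP => uA; case: ifP => vA.
  - move/eqP; rewrite -Hh !permKV => /eqP.
    by rewrite !repP.
  - by move=> E; move: vA; rewrite -E inA.
  - by move=> E; move: uA; rewrite E inA.
  - by [].
exists (mkperm f) => x; rewrite (mkpermE finj) /f inA.
apply/eqP; rewrite -Hh permKV repP ?inA //.
Qed.

Definition rho (g : {perm 'I_n}) := fun y => if y \in A then a (g y) else y.
Definition rhop g := mkperm (rho g).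
Definition RR := [set rhop g | g in G].
Definition FF := <<RR>>.
Definition goodp (p : {perm 'I_n}) := (forall y, y \in A -> p y \in A) /\ S (tcomp a (pmap p)).

Lemma rhop_out g u : u \notin A -> rhop g u = u.
Proof.
move/negbTE=> uA; rewrite /rhop; case: (mkperm_cases (rho g)) => [->|->]; by rewrite ?perm1 /rho ?uA.
Qed.
Lemma rhopV_out g u : u \notin A -> (rhop g)^-1 u = u.
Proof. by move=> uA; rewrite -{1}(rhop_out g uA) permK. Qed.
Lemma rhop_in g u : u \in A -> rhop g u \in A.
Proof.
move=> uA; rewrite /rhop; case: (mkperm_cases (rho g)) => [->|->]; by rewrite ?perm1 /rho ?uA ?inA.
Qed.
Lemma rhopE (g : {perm 'I_n}) : {in A &, injective (fun y => a (g y))} ->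
  forall y, y \in A -> rhop g y = a (g y).
Proof.
move=> inj y yA; rewrite /rhop mkpermE ?/rho ?yA //; last first.
move=> u v; rewrite /rho; case: ifP => uA; case: ifP => vA.
- by apply: inj.
- by move=> E; move: vA; rewrite -E inA.
- by move=> E; move: uA; rewrite E inA.
- by [].
Qed.

Lemma good1 : goodp 1.
Proof.
split=> [y|]; first by rewrite perm1.
have -> : tcomp a (pmap 1) = a by apply/ffunP => x; rewrite !ffunE perm1.
exact: S_a.
Qed.

Lemma good_mulR p g : g \in G -> goodp p -> goodp (p * rhop g).
Proof.
move=> Gg [HA HS]; split=> [y yA|]; first by rewrite permM rhop_in // HA.
case: (mkperm_cases (rho g)) => [E|E]; last by rewrite /rhop E mulg1.
have -> : tcomp a (pmap (p * rhop g)) = tcomp (tcomp a (pmap p)) (tcomp (pmap g) a).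
  by apply/ffunP => x; rewrite !ffunE permM /rhop E /rho HA ?inA.
apply: gen_comp => //; apply: gen_comp; [exact: S_G | exact: S_a].
Qed.

Lemma good_mulF p f : f \in FF -> goodp p -> goodp (p * f).
Proof.
case/gen_prodgP => m [c Hc ->]; elim: m c Hc => [|m IH] c Hc Hp.
  by rewrite big_ord0 mulg1.
rewrite big_ord_recr /= mulgA.
have := Hc ord_max; case/imsetP => g Gg ->.
apply: good_mulR => //; apply: IH => // i; exact: Hc.
Qed.
Lemma get_g (r : 'I_n -> 'I_n) : {in A &, injective r} ->
  exists2 g, g \in G & [set g z | z in A] = [set r c | c in A].
Proof.
move=> inj; apply: Hk => //; rewrite card_in_imset //.
Qed.

Lemma valid (g h q psi : {perm 'I_n}) (r : 'I_n -> 'I_n) :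
  [set g z | z in A] = [set r c | c in A] ->
  (forall u v, (a (h u) == a (h v)) = (a (q u) == a (q v))) ->
  (forall c, c \in A -> a (q (r c)) = psi c) ->
  {in A &, injective (fun y => a ((g * h) y))}.
Proof.
move=> Eg Hh Hq z1 z2 z1A z2A; rewrite !permM => E.
have : g z1 \in [set r c | c in A] by rewrite -Eg; apply/imsetP; exists z1.
case/imsetP => c1 c1A e1.
have : g z2 \in [set r c | c in A] by rewrite -Eg; apply/imsetP; exists z2.
case/imsetP => c2 c2A e2.
have : a (q (r c1)) = a (q (r c2)) by apply/eqP; rewrite -Hh -e1 -e2 E.
rewrite !Hq // => /perm_inj e.
by apply: (@perm_inj _ g); rewrite e1 e2 e.
Qed.

Lemma valid0 (g psi : {perm 'I_n}) (r : 'I_n -> 'I_n) :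
  [set g z | z in A] = [set r c | c in A] ->
  (forall c, c \in A -> a (r c) = psi c) ->
  {in A &, injective (fun y => a (g y))}.
Proof.
move=> Eg Hq; have := @valid g 1 1 psi r Eg (fun u v => erefl) .
rewrite mulg1; apply => c cA; rewrite perm1; exact: Hq.
Qed.

Lemma rhopV_eval (g : {perm 'I_n}) z u : {in A &, injective (fun y => a (g y))} ->
  z \in A -> a (g z) = u -> (rhop g)^-1 u = z.
Proof. by move=> v zA <-; rewrite -(rhopE v zA) permK. Qed.

Lemma preim_r (g : {perm 'I_n}) (r : 'I_n -> 'I_n) c :
  [set g z | z in A] = [set r c | c in A] -> c \in A -> exists2 z, z \in A & g z = r c.
Proof.
move=> Eg cA; have : r c \in [set g z | z in A] by rewrite Eg; apply/imsetP; exists c.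
by case/imsetP => z zA ->; exists z.
Qed.

Lemma core x x' w : x != x' -> a x = a x' -> a w != a x -> tperm (a x) (a w) \in FF.
Proof.
move=> nxx' exx' nw.
set b := a x; set y := a w.
have bA : b \in A := inA x.
have yA : y \in A := inA w.
have nby : b != y by rewrite eq_sym.
have xw : x != w by apply: contraNneq nw => ->.
have x'w : x' != w by apply: contraNneq nw => <-; rewrite exx'.
pose r1 c := if c == b then x else if c == y then w else rep c.
pose r2 c := if c == b then x else if c == y then x' else rep c.
pose r3 c := if c == b then x' else if c == y then w else rep c.
pose t1 := tperm x w. pose t2 := tperm x' w. pose sw := tperm b y.
have repo c : c \in A -> c != b -> c != y ->
    [/\ x != rep c, x' != rep c & w != rep c].
  move=> cA cb cy; split; apply/eqP => E.
  - by move: cb; rewrite -(repP cA) -E eqxx.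
  - by move: cb; rewrite -(repP cA) -E /b exx' eqxx.
  - by move: cy; rewrite -(repP cA) -E eqxx.
have swo c : c != b -> c != y -> sw c = c.
  by move=> cb cy; rewrite /sw tpermD // eq_sym.
have swA c : c \in A -> sw c \in A.
  by move=> cA; rewrite /sw; case: tpermP.
have f11 c : c \in A -> a (r1 c) = c.
  move=> cA; rewrite /r1; case: ifP => [/eqP->//|cb]; case: ifP => [/eqP->//|cy].
  exact: repP.
have f33 c : c \in A -> a (r3 c) = c.
  move=> cA; rewrite /r3; case: ifP => [/eqP->//|cb]; case: ifP => [/eqP->//|cy].
  exact: repP.
have f1 c : c \in A -> a (t1 (r1 c)) = sw c.
  move=> cA; rewrite /r1; case: ifP => [/eqP->|cb].
    by rewrite /t1 tpermL /sw tpermL.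
  case: ifP => [/eqP->|cy]; first by rewrite /t1 tpermR /sw tpermR.
  have [o1 o2 o3] := repo c cA (negbT cb) (negbT cy).
  by rewrite /t1 tpermD // repP // swo ?cb ?cy.
have f21 c : c \in A -> a (t1 (r2 c)) = sw c.
  move=> cA; rewrite /r2; case: ifP => [/eqP->|cb].
    by rewrite /t1 tpermL /sw tpermL.
  case: ifP => [/eqP->|cy]; first by rewrite /t1 tpermD // -?exx' /sw ?tpermR // eq_sym.
  have [o1 o2 o3] := repo c cA (negbT cb) (negbT cy).
  by rewrite /t1 tpermD // repP // swo ?cb ?cy.
have f22 c : c \in A -> a (t2 (r2 c)) = c.
  move=> cA; rewrite /r2; case: ifP => [/eqP->|cb].
    by rewrite /t2 tpermD // eq_sym.
  case: ifP => [/eqP->|cy]; first by rewrite /t2 tpermL.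
  have [o1 o2 o3] := repo c cA (negbT cb) (negbT cy).
  by rewrite /t2 tpermD // repP.
have f32 c : c \in A -> a (t2 (r3 c)) = sw c.
  move=> cA; rewrite /r3; case: ifP => [/eqP->|cb].
    by rewrite /t2 tpermL /sw tpermL.
  case: ifP => [/eqP->|cy]; first by rewrite /t2 tpermR -exx' /sw tpermR.
  have [o1 o2 o3] := repo c cA (negbT cb) (negbT cy).
  by rewrite /t2 tpermD // repP // swo ?cb ?cy.
have injr (r : 'I_n -> 'I_n) (q psi : {perm 'I_n}) :
    (forall c, c \in A -> a (q (r c)) = psi c) -> {in A &, injective r}.
  move=> H c1 c2 A1 A2 E; apply: (@perm_inj _ psi); by rewrite -!H // E.
have [g1 Gg1 E1] := get_g (injr r1 t1 sw f1).
have [g2 Gg2 E2] := get_g (injr r2 t2 1 (fun c cA => etrans (f22 c cA) (esym (perm1 c)))).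
have [g3 Gg3 E3] := get_g (injr r3 t2 sw f32).
have [h1 Gh1 H1] := lam_step t1.
have [h2 Gh2 H2] := lam_step t2.
have v1 := valid0 (psi := 1) E1 (fun c cA => etrans (f11 c cA) (esym (perm1 c))).
have v3 := valid0 (psi := 1) E3 (fun c cA => etrans (f33 c cA) (esym (perm1 c))).
have v1h := valid E1 H1 f1.
have v2h1 := valid E2 H1 f21.
have v2h2 := valid (psi := 1) E2 H2 (fun c cA => etrans (f22 c cA) (esym (perm1 c))).
have v3h := valid E3 H2 f32.
have -> : tperm b y = (rhop g1)^-1 * rhop (g1 * h1) * (rhop (g2 * h1))^-1 *
                       rhop (g2 * h2) * (rhop (g3 * h2))^-1 * rhop g3.
  apply/permP => u; rewrite !permM.
  case uA: (u \in A); last first.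
    have nuA : u \notin A by rewrite uA.
    rewrite !(rhop_out, rhopV_out) // tpermD //.
      by apply: contraNneq nuA => <-.
    by apply: contraNneq nuA => <-.
  have [z1 z1A e1] := preim_r E1 uA.
  rewrite (@rhopV_eval _ z1 u v1 z1A); last by rewrite e1 f11.
  rewrite (rhopE v1h z1A) permM e1.
  have [z2 z2A e2] := preim_r E2 uA.
  rewrite (@rhopV_eval _ z2 _ v2h1 z2A); last first.
    by rewrite permM e2; apply/eqP; rewrite H1 f1 // f21.
  rewrite (rhopE v2h2 z2A) permM e2.
  have [z3 z3A e3] := preim_r E3 (swA u uA).
  rewrite (@rhopV_eval _ z3 _ v3h z3A); last first.
    by rewrite permM e3; apply/eqP; rewrite H2 f32 ?swA // f22 // /sw tpermK.
  by rewrite (rhopE v3 z3A) e3 f33 ?swA.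
have inR g : g \in G -> rhop g \in FF by move=> Gg; apply: mem_gen; apply/imsetP; exists g.
by rewrite !groupM ?groupV ?inR ?groupM.
Qed.
Lemma tperm_FF u v : u \in A -> v \in A -> tperm u v \in FF.
Proof.
have [x [x' nxx' exx']] := a_ninj.
set b := a x.
have TF z : z \in A -> tperm b z \in FF.
  move=> zA; have [->|zb] := eqVneq z b; first by rewrite tperm1 group1.
  case/imsetP: zA zb => w _ -> wb; exact: (core nxx' exx' wb).
move=> uA vA.
have [->|ub] := eqVneq u b; first exact: TF.
have [->|vb] := eqVneq v b; first by rewrite tpermC; exact: TF.
have [->|uv] := eqVneq u v; first by rewrite tperm1 group1.
have -> : tperm u v = (tperm b v) ^ (tperm b u).
  by rewrite tpermJ tpermL tpermD // eq_sym.
by rewrite groupJ ?TF.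
Qed.

Lemma good_all (p : {perm 'I_n}) : (forall y, y \in A -> p y \in A) -> goodp p.
Proof.
move: {2}#|[set y in A | p y != y]| (leqnn #|[set y in A | p y != y]|) => m.
elim: m p => [|m IH] p Hm HA.
  split=> //.
  have -> : tcomp a (pmap p) = a.
    apply/ffunP => x; rewrite !ffunE; apply/eqP; apply/negPn/negP => ne.
    have : a x \in [set y in A | p y != y] by rewrite inE inA ne.
    by move: Hm; rewrite leqn0 cards_eq0 => /eqP ->; rewrite inE.
  exact: S_a.
have [E|[y]] := set_0Vmem [set y in A | p y != y].
  apply: IH => //; by rewrite E cards0.
rewrite inE => /andP[yA ny].
pose t := tperm y (p y).
have tA z : z \in A -> t z \in A.
  by move=> zA; rewrite /t; case: tpermP => [_|_|_ _] //; exact: HA.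
have Gp' : goodp (p * t).
  apply: IH; last by move=> z zA; rewrite permM tA // HA.
  rewrite -ltnS; apply: leq_trans Hm; apply: proper_card; apply/properP; split.
    apply/subsetP => z; rewrite !inE permM => /andP[zA nz]; rewrite zA /=.
    apply: contra nz => /eqP pz; rewrite pz /t tpermD //.
      by apply: contra ny => /eqP e; rewrite e pz.
    apply: contra ny => /eqP e; apply/eqP; apply: (@perm_inj _ p); by rewrite e pz.
  exists y; first by rewrite inE yA ny.
  by rewrite inE permM /t tpermR eqxx andbF.
have -> : p = p * t * t by rewrite -mulgA tperm2 mulg1.
by apply: good_mulF => //; apply: tperm_FF => //; exact: HA.
Qed.

Lemma S_ap (sg : {perm 'I_n}) : S (tcomp a (pmap sg)).
Proof.
have [h Gh Eh] : exists2 h, h \in G & [set h z | z in A] = [set sg z | z in A].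
  by apply: Hk => //; rewrite card_imset //; exact: perm_inj.
have gp : goodp (sg * h^-1).
  apply: good_all => z zA; rewrite permM.
  have : sg z \in [set h z | z in A] by rewrite Eh; apply/imsetP; exists z.
  by case/imsetP => z' z'A ->; rewrite permK.
have -> : tcomp a (pmap sg) = tcomp (tcomp a (pmap (sg * h^-1))) (pmap h).
  by apply/ffunP => x; rewrite !ffunE permM permKV.
apply: gen_comp; [exact: gp.2 | exact: S_G].
Qed.

Lemma inv_G f : gen_monoid (gens a G) f -> (exists2 g, g \in G & f = pmap g) \/ ~ injective f.
Proof.
have [x [x' nxx' exx']] := a_ninj.
elim=> [|f0 s _ IH Hs]; first by left; exists 1; rewrite ?group1 ?pmap1.
case: IH => [[g Gg ->]|ninj]; last first.
  right => inj; apply: ninj => u v e; apply: inj; by rewrite !ffunE e.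
case: Hs => [->|[g' Gg' ->]]; last by left; exists (g * g'); rewrite ?groupM ?pmapM.
right => inj; move/eqP: nxx'; apply; rewrite -(permKV g x) -(permKV g x'); congr (g _).
apply: inj; by rewrite !ffunE !permKV.
Qed.

Lemma inv_S f : gen_monoid (gens a [set: {perm 'I_n}]) f ->
  (exists p, f = pmap p) \/ exists u, exists sg, S u /\ f = tcomp (tcomp u a) (pmap sg).
Proof.
elim=> [|f0 s _ IH Hs]; first by left; exists 1; rewrite pmap1.
case: IH => [[p ->]|[u [sg [Su ->]]]].
  case: Hs => [->|[q _ ->]]; last by left; exists (p * q); rewrite pmapM.
  have [h Gh [pi Hpi]] := lam_perm p.
  right; exists (pmap h), pi; split; first exact: S_G.
  by apply/ffunP => x; rewrite !ffunE Hpi.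
case: Hs => [->|[q _ ->]]; last first.
  by right; exists u, (sg * q); split=> //; rewrite -tcompA pmapM.
have [h Gh [pi Hpi]] := lam_perm sg.
right; exists (tcomp (tcomp u a) (pmap h)), pi; split.
  by apply: gen_comp; [apply: gen_comp => //; exact: S_a | exact: S_G].
by apply/ffunP => x; rewrite !ffunE Hpi.
Qed.

Lemma gens_mono f : gen_monoid (gens a G) f -> gen_monoid (gens a [set: {perm 'I_n}]) f.
Proof.
elim=> [|f0 s _ IH Hs]; first exact: gen_one.
apply: gen_mul => //; case: Hs => [->|[g _ ->]]; [by left | by right; exists g].
Qed.

Lemma main : Sn_pair a G.
Proof.
move=> f; split.
- case=> Hf nG; split; first exact: gens_mono.
  move=> [g _ Eg]; case: (inv_G Hf) => [//|]; apply; rewrite Eg => u v.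
  by rewrite !ffunE; exact: perm_inj.
- case=> Hf nP; split; last by move=> [g _ Eg]; apply: nP; exists g.
  case: (inv_S Hf) => [[p Ep]|[u [sg [Su ->]]]]; first by case: nP; exists p.
  rewrite -tcompA; apply: gen_comp => //; exact: S_ap.
Qed.
End Main.

Theorem lemma5p2 (n : nat) (a : {ffun 'I_n -> 'I_n}) (G : {group {perm 'I_n}}) :
  rank a < n ->
  k_homogeneous G (rank a) ->
  lambda_homogeneous G (kernel_type a) ->
  Sn_pair a G.
Proof. move=> Hr Hk Hl; exact: main. Qed.
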